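(* Let $\Gamma$ be a geometry of type $C_3$ in which two distinct coplanar lines through a common point lie in a unique common plane. Let $\alpha=(p,L,q,M,p)$ be a non-degenerate primitive path, $N$ a line admissible for $\alpha$, and $r$ a point of $N$. Then: (1) $\sigma^N_{q\to r}(\alpha)=\alpha$ if and only if $r=q$; (2) $\sigma^N_{q\to r}(\alpha)$ is a non-degenerate primitive path and $N$ is admissible for it; (3) $\sigma^N_{r\to q}(\sigma^N_{q\to r}(\alpha))=\alpha$; (4) $\alpha\sim\sigma^N_{q\to r}(\alpha)$.
   Context: A geometry of type $C_3$ is a (residually connected) rank-3 Tits geometry belonging to the diagram $\circ\!-\!\circ\!=\!\circ$, with types points, lines, planes; the residue of a plane is a projective plane on its points and lines. Paths, homotopy $\sim$: generated by $(x,y,x)\leftrightarrow(x)$ and $(x,y,z)\leftrightarrow(x,z)$ for flags $\{x,y,z\}$. A primitive path is a closed path $(p,L,q,M,p)$ with $p,q$ points and $L,M$ lines; degenerate if $p=q$ or $L=M$. Shift: given a non-degenerate primitive path $\alpha=(p,L,q,M,p)$ (so $L,M$ are not coplanar), a line $N$ is admissible for $\alpha$ if $N$ is incident with $q$ and is coplanar with $L$ and with $M$. For a point $r$ on $N$, let $\xi$ be the plane on $N$ and $L$, $\chi$ the plane on $N$ and $M$, $L'$ the line of $\xi$ through $p$ and $r$, $M'$ the line of $\chi$ through $p$ and $r$; the shift of $\alpha$ from $q$ to $r$ along $N$ is $\sigma^N_{q\to r}(\alpha)=(p,L',r,M',p)$. *)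

(* Defs.v *)
From Stdlib Require Import List Arith Relations ClassicalEpsilon.
Import ListNotations.
Set Implicit Arguments.

(* A rank-3 incidence geometry over the type set {0,1,2}
   (0 = points, 1 = lines, 2 = planes). *)
Record geometry := {
  ele :> Type;
  typ : ele -> nat;
  inc : ele -> ele -> Prop;
  typ_lt : forall x, typ x < 3;
  inc_refl : forall x, inc x x;
  inc_sym : forall x y, inc x y -> inc y x;
  inc_typ : forall x y, inc x y -> typ x = typ y -> x = y
}.
Arguments typ {g} _.
Arguments inc {g} _ _.

Section Geo.
Context {G : geometry}.

Definition is_point (x : G) := typ x = 0.
Definition is_line (x : G) := typ x = 1.
Definition is_plane (x : G) := typ x = 2.

Definition flag (F : list G) := forall x y, In x F -> In y F -> inc x y.
Definition chamber (F : list G) :=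
  flag F /\ forall i, i < 3 -> exists x, In x F /\ typ x = i.

Definition res (F : list G) (x : G) :=
  (forall y, In y F -> inc x y /\ typ x <> typ y).

Definition res_connected (F : list G) :=
  forall x y, res F x -> res F y ->
    clos_refl_trans G (fun a b => res F a /\ res F b /\ inc a b) x y.

Definition projective_plane (P Ls : G -> Prop) :=
  (forall a b, P a -> P b -> a <> b ->
     exists l, Ls l /\ inc a l /\ inc b l /\
       forall l', Ls l' -> inc a l' -> inc b l' -> l' = l) /\
  (forall l m, Ls l -> Ls m -> l <> m ->
     exists a, P a /\ inc a l /\ inc a m /\
       forall a', P a' -> inc a' l -> inc a' m -> a' = a) /\
  (exists a1 a2 a3 a4, P a1 /\ P a2 /\ P a3 /\ P a4 /\
     forall l, Ls l ->
       ~ (inc a1 l /\ inc a2 l /\ inc a3 l) /\ ~ (inc a1 l /\ inc a2 l /\ inc a4 l) /\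
       ~ (inc a1 l /\ inc a3 l /\ inc a4 l) /\ ~ (inc a2 l /\ inc a3 l /\ inc a4 l)).

Definition gen_quadrangle (P Ls : G -> Prop) :=
  (forall a b l m, P a -> P b -> a <> b -> Ls l -> Ls m ->
     inc a l -> inc b l -> inc a m -> inc b m -> l = m) /\
  (forall a l, P a -> Ls l -> ~ inc a l ->
     exists b m, P b /\ Ls m /\ inc a m /\ inc b m /\ inc b l /\
       forall b' m', P b' -> Ls m' -> inc a m' -> inc b' m' -> inc b' l ->
         b' = b /\ m' = m) /\
  (forall a, P a -> exists l m, Ls l /\ Ls m /\ l <> m /\ inc a l /\ inc a m) /\
  (forall l, Ls l -> exists a b, P a /\ P b /\ a <> b /\ inc a l /\ inc b l).

(* geometry of type C_3 : o - o = o (points - lines = planes) *)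
Definition is_C3 :=
  (forall F, flag F -> exists C, chamber C /\ incl F C) /\
  (* residual connectedness: residues of flags of corank >= 2 are connected *)
  res_connected [] /\ (forall x : G, res_connected [x]) /\
  (forall pi : G, is_plane pi ->
     projective_plane (fun a => is_point a /\ inc a pi)
                      (fun l => is_line l /\ inc l pi)) /\
  (* residue of a line: generalized digon *)
  (forall L a pi : G, is_line L -> is_point a -> is_plane pi ->
     inc a L -> inc pi L -> inc a pi) /\
  (forall p : G, is_point p ->
     gen_quadrangle (fun l => is_line l /\ inc l p)
                    (fun pi => is_plane pi /\ inc pi p)).

Fixpoint is_path (a : list G) : Prop :=
  match a with
  | x :: ((y :: _) as b) => x <> y /\ inc x y /\ is_path b
  | _ => True
  end.

Inductive elem_htpy : list G -> list G -> Prop :=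
| eh_back (a b : list G) (x y : G) :
    elem_htpy (a ++ x :: y :: x :: b) (a ++ x :: b)
| eh_flag (a b : list G) (x y z : G) :
    inc x y -> inc y z -> inc x z ->
    elem_htpy (a ++ x :: y :: z :: b) (a ++ x :: z :: b).

Definition homotopic : list G -> list G -> Prop :=
  clos_refl_sym_trans (list G)
    (fun a b => is_path a /\ is_path b /\ elem_htpy a b).

Definition coplanar (x y : G) := exists xi, is_plane xi /\ inc xi x /\ inc xi y.

Definition primitive (a : list G) :=
  exists p L q M, a = [p; L; q; M; p] /\
    is_point p /\ is_line L /\ is_point q /\ is_line M /\
    is_path a.

Definition nondeg_primitive (a : list G) :=
  exists p L q M, a = [p; L; q; M; p] /\ primitive a /\ p <> q /\ L <> M.

Definition admissible (N : G) (a : list G) :=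
  exists p L q M, a = [p; L; q; M; p] /\
    is_line N /\ inc N q /\ coplanar N L /\ coplanar N M.

Definition plane_on (x y : G) : G :=
  epsilon (inhabits x) (fun xi => is_plane xi /\ inc xi x /\ inc xi y).
Definition line_on (xi a b : G) : G :=
  epsilon (inhabits a) (fun l => is_line l /\ inc l xi /\ inc l a /\ inc l b).

(* shift sigma^N_{q -> r} of (p,L,q,M,p); q is the third entry of the path *)
Definition shift (a : list G) (N r : G) : list G :=
  match a with
  | [p; L; _; M; _] =>
      [p; line_on (plane_on N L) p r; r; line_on (plane_on N M) p r; p]
  | _ => a
  end.

End Geo.
Arguments is_C3 G : clear implicits.

(* Main.v *)
Require Import Defs.
From Stdlib Require Import List.
From Stdlib Require Import Arith Relations ClassicalEpsilon Lia.
Import ListNotations.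

Section S.
Context {G : geometry}.

Lemma typ_neq (x y : G) : typ x <> typ y -> x <> y.
Proof. intros H E; subst; auto. Qed.

Definition PPax := forall pi : G, is_plane pi ->
  projective_plane (fun a => is_point a /\ inc a pi) (fun l => is_line l /\ inc l pi).

Lemma pp_uniq (HPP : PPax) (pi a b l1 l2 : G) : is_plane pi -> is_point a -> is_point b -> a <> b ->
  inc a pi -> inc b pi ->
  is_line l1 -> inc l1 pi -> inc a l1 -> inc b l1 ->
  is_line l2 -> inc l2 pi -> inc a l2 -> inc b l2 -> l1 = l2.
Proof.
  intros. destruct (HPP pi H) as [HA _].
  destruct (HA a b) as [l [_ [_ [_ U]]]]; try (split; assumption); try assumption.
  assert (l1 = l) by (apply U; try split; assumption).
  assert (l2 = l) by (apply U; try split; assumption). congruence.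
Qed.

Lemma pp_ex (HPP : PPax) (pi a b : G) : is_plane pi -> is_point a -> is_point b -> a <> b ->
  inc a pi -> inc b pi ->
  exists l, is_line l /\ inc l pi /\ inc l a /\ inc l b.
Proof.
  intros. destruct (HPP pi H) as [HA _].
  destruct (HA a b) as [l [[Hl1 Hl2] [Ha [Hb _]]]]; try (split; assumption); try assumption.
  exists l. repeat split; auto using inc_sym.
Qed.

Lemma hstep (a b : list G) : is_path a -> is_path b -> elem_htpy a b -> homotopic a b.
Proof. intros; apply rst_step; auto. Qed.
Lemma hstepb (a b : list G) : is_path b -> is_path a -> elem_htpy b a -> homotopic a b.
Proof. intros; apply rst_sym, rst_step; auto. Qed.
Lemma htrans (a b c : list G) : homotopic a b -> homotopic b c -> homotopic a c.
Proof. intros; eapply rst_trans; eauto. Qed.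

End S.

Ltac tneq := apply typ_neq; unfold is_point, is_line, is_plane in *; congruence.
Ltac tinc := first [assumption | apply inc_sym; assumption].
Ltac tpath := simpl; repeat split; first [tneq | tinc].
Ltac fw B pf := apply (htrans _ B); [apply hstep; [tpath|tpath|apply pf; tinc] | ].
Ltac bw B pf := apply (htrans _ B); [apply hstepb; [tpath|tpath|apply pf; tinc] | ].

Theorem mainTheorem10 (G : geometry) (HC3 : is_C3 G)
  (Huniq : forall (p L M xi xi' : G),
     is_point p -> is_line L -> is_line M -> L <> M -> inc p L -> inc p M ->
     is_plane xi -> inc xi L -> inc xi M ->
     is_plane xi' -> inc xi' L -> inc xi' M -> xi = xi')
  (p L q M N r : G)
  (Halpha : nondeg_primitive [p; L; q; M; p])
  (HN : admissible N [p; L; q; M; p])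
  (Hr : is_point r) (HrN : inc r N) :
  let alpha := [p; L; q; M; p] in
  (shift alpha N r = alpha <-> r = q) /\
  (nondeg_primitive (shift alpha N r) /\ admissible N (shift alpha N r)) /\
  shift (shift alpha N r) N q = alpha /\
  homotopic alpha (shift alpha N r).
Proof.
  destruct HC3 as [_ [_ [_ [HPP [HDIG _]]]]].
  change (@PPax G) in HPP.
  destruct Halpha as [p0 [L0 [q0 [M0 [E [[p1 [L1 [q1 [M1 [E1 [Hp [HL [Hq [HM Hpath]]]]]]]]] [Hpq HLM]]]]]]].
  injection E as <- <- <- <-. injection E1 as <- <- <- <-.
  simpl in Hpath. destruct Hpath as [_ [HpL [_ [HLq [_ [HqM [_ [HMp _]]]]]]]].
  destruct HN as [p0 [L0 [q0 [M0 [E [HNl [HNq [[x0 [Hx0 [Hx0N Hx0L]]] [y0 [Hy0 [Hy0N Hy0M]]]]]]]]]]].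
  injection E as <- <- <- <-.
  assert (NC : forall pi, is_plane pi -> inc pi L -> inc pi M -> False).
  { intros pi Hpi Hp1 Hp2. apply HLM.
    apply (pp_uniq HPP pi p q); auto;
      try (apply (HDIG L); auto; tinc); try tinc. }
  assert (HNL : N <> L).
  { intro; subst. apply (NC y0); auto. }
  assert (HNM : N <> M).
  { intro; subst. apply (NC x0); auto. }
  cbn [shift].
  assert (Hxi : is_plane (plane_on N L) /\ inc (plane_on N L) N /\ inc (plane_on N L) L).
  { try unfold plane_on; try unfold line_on; apply epsilon_spec. exists x0; auto. }
  assert (Hchi : is_plane (plane_on N M) /\ inc (plane_on N M) N /\ inc (plane_on N M) M).
  { try unfold plane_on; try unfold line_on; apply epsilon_spec. exists y0; auto. }
  set (xi := plane_on N L) in *. set (chi := plane_on N M) in *.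
  destruct Hxi as [Hxi [HxiN HxiL]]. destruct Hchi as [Hchi [HchiN HchiM]].
  assert (pxi : inc p xi) by (apply (HDIG L); auto; tinc).
  assert (qxi : inc q xi) by (apply (HDIG L); auto; tinc).
  assert (rxi : inc r xi) by (apply (HDIG N); auto; tinc).
  assert (pchi : inc p chi) by (apply (HDIG M); auto; tinc).
  assert (qchi : inc q chi) by (apply (HDIG M); auto; tinc).
  assert (rchi : inc r chi) by (apply (HDIG N); auto; tinc).
  assert (Hpr : p <> r).
  { intro; subst. apply HNL. apply (pp_uniq HPP xi r q); auto; tinc. }
  assert (HL' : is_line (line_on xi p r) /\ inc (line_on xi p r) xi /\ inc (line_on xi p r) p /\ inc (line_on xi p r) r).
  { try unfold plane_on; try unfold line_on; apply epsilon_spec. apply pp_ex; auto. }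
  assert (HM' : is_line (line_on chi p r) /\ inc (line_on chi p r) chi /\ inc (line_on chi p r) p /\ inc (line_on chi p r) r).
  { try unfold plane_on; try unfold line_on; apply epsilon_spec. apply pp_ex; auto. }
  set (L' := line_on xi p r) in *. set (M' := line_on chi p r) in *.
  destruct HL' as [HL' [L'xi [L'p L'r]]]. destruct HM' as [HM' [M'chi [M'p M'r]]].
  assert (HL'N : L' <> N).
  { intro E. rewrite E in L'p. apply HNL.
    apply (pp_uniq HPP xi p q); auto; tinc. }
  assert (HM'N : M' <> N).
  { intro E. rewrite E in M'p. apply HNM.
    apply (pp_uniq HPP chi p q); auto; tinc. }
  assert (Hxichi : xi <> chi).
  { intro E. apply (NC xi); auto. rewrite E; auto. }
  assert (HL'M' : L' <> M').
  { intro E. apply Hxichi. apply (Huniq r N L'); auto; try tinc.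
    all: rewrite E; tinc. }
  assert (K1 : r = q -> L' = L /\ M' = M).
  { intro; subst. split.
    - apply (pp_uniq HPP xi p q); auto; tinc.
    - apply (pp_uniq HPP chi p q); auto; tinc. }
  split; [|split; [|split]].
  - split.
    + intro E. injection E; intros; auto.
    + intro E. destruct (K1 E) as [E1 E2]. rewrite E1, E2, E. reflexivity.
  - split.
    + exists p, L', r, M'. split; [reflexivity|]. split; [|split; auto].
      exists p, L', r, M'. split; [reflexivity|]. repeat split; auto. all: tpath.
    + exists p, L', r, M'. repeat split; auto; try tinc.
      exists xi; repeat split; auto; tinc.
      exists chi; repeat split; auto; tinc.
  - cbn [shift].
    assert (E1 : plane_on N L' = xi).
    { assert (Hz : is_plane (plane_on N L') /\ inc (plane_on N L') N /\ inc (plane_on N L') L').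
      { try unfold plane_on; try unfold line_on; apply epsilon_spec. exists xi; repeat split; auto; tinc. }
      destruct Hz as [Z1 [Z2 Z3]].
      apply (Huniq r N L'); auto; tinc. }
    assert (E2 : plane_on N M' = chi).
    { assert (Hz : is_plane (plane_on N M') /\ inc (plane_on N M') N /\ inc (plane_on N M') M').
      { try unfold plane_on; try unfold line_on; apply epsilon_spec. exists chi; repeat split; auto; tinc. }
      destruct Hz as [Z1 [Z2 Z3]].
      apply (Huniq r N M'); auto; tinc. }
    rewrite E1, E2.
    assert (F1 : is_line (line_on xi p q) /\ inc (line_on xi p q) xi /\ inc (line_on xi p q) p /\ inc (line_on xi p q) q).
    { try unfold plane_on; try unfold line_on; apply epsilon_spec. exists L; repeat split; auto; tinc. }
    assert (F2 : is_line (line_on chi p q) /\ inc (line_on chi p q) chi /\ inc (line_on chi p q) p /\ inc (line_on chi p q) q).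
    { try unfold plane_on; try unfold line_on; apply epsilon_spec. exists M; repeat split; auto; tinc. }
    destruct F1 as [F1 [F2' [F3 F4]]]. destruct F2 as [G1 [G2 [G3 G4]]].
    f_equal. f_equal. apply (pp_uniq HPP xi p q); auto; tinc.
    f_equal. f_equal. apply (pp_uniq HPP chi p q); auto; tinc.
  - cbv zeta.
    bw [p;L;q;N;q;M;p] (eh_back [p;L] [M;p] q N).
    bw [p;L;q;N;r;N;q;M;p] (eh_back [p;L;q] [q;M;p] N r).
    bw [p;L;xi;q;N;r;N;q;M;p] (eh_flag [p] [N;r;N;q;M;p] L xi q).
    fw [p;xi;q;N;r;N;q;M;p] (eh_flag [] [q;N;r;N;q;M;p] p L xi).
    bw [p;xi;q;xi;N;r;N;q;M;p] (eh_flag [p;xi] [r;N;q;M;p] q xi N).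
    fw [p;xi;q;xi;r;N;q;M;p] (eh_flag [p;xi;q] [N;q;M;p] xi N r).
    fw [p;xi;r;N;q;M;p] (eh_back [p] [r;N;q;M;p] xi q).
    bw [p;L';xi;r;N;q;M;p] (eh_flag [] [r;N;q;M;p] p L' xi).
    fw [p;L';r;N;q;M;p] (eh_flag [p] [N;q;M;p] L' xi r).
    bw [p;L';r;N;chi;q;M;p] (eh_flag [p;L';r] [M;p] N chi q).
    fw [p;L';r;chi;q;M;p] (eh_flag [p;L'] [q;M;p] r N chi).
    bw [p;L';r;chi;q;chi;M;p] (eh_flag [p;L';r;chi] [p] q chi M).
    fw [p;L';r;chi;q;chi;p] (eh_flag [p;L';r;chi;q] [] chi M p).
    fw [p;L';r;chi;p] (eh_back [p;L';r] [p] chi q).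
    bw [p;L';r;M';chi;p] (eh_flag [p;L'] [p] r M' chi).
    fw [p;L';r;M';p] (eh_flag [p;L';r] [] M' chi p).
    apply rst_refl.
Qed.
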